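(* Let $H$ be a set of $n$ objects with an associated decomposition scheme of combinatorial dimension $b$ that complies with the Clarkson–Shor framework. Assume its local growth function satisfies $u(m)\le 2^\alpha m^\beta$ for all $m$, for some real $\alpha$ and some $\beta\ge 1$. Let $R$ be a $\rho$-sample from $H$ with $\rho\ge 4b$, and let $\ell>1$. Let $\mathcal{CD}_{\ge \ell}(R)$ denote the set of $\ell$-heavy cells of $\mathcal{CD}(R)$. Then $$\mathbb{E}\bigl[\,|\mathcal{CD}_{\ge\ell}(R)|\,\bigr]\ \le\ 3^b\,2^{\alpha-\beta}\rho^\beta e^{-\ell/2}.$$
   Context: Clarkson–Shor framework. $H$ is a finite set of objects embedded in some space $E$. Every subset $I\subseteq H$ determines a set $\mathcal{CD}(I)$ of cells, which are subsets of $E$. Combinatorial dimension: there is an integer $b>0$ such that for every $I\subseteq H$ and every $\sigma\in\mathcal{CD}(I)$ there is $J\subseteq I$ with $|J|\le b$ and $\sigma\in\mathcal{CD}(J)$. A smallest such $J$ is a defining set $D(\sigma)$ of $\sigma$; it need not be unique, and any choice may be used. The least such $b$ is the combinatorial dimension. Conflict list: an object $f\in H$ conflicts with $\sigma$ if $\sigma\notin\mathcal{CD}(D(\sigma)\cup\{f\})$. The conflict list $K(\sigma)$ is the set of objects of $H$ that conflict with $\sigma$; always $D(\sigma)\cap K(\sigma)=\emptyset$. Compliance with the framework means both axioms hold: (i) for every $R\subseteq H$ and every $\sigma\in\mathcal{CD}(R)$, some defining set $D(\sigma)$ satisfies $D(\sigma)\subseteq R$, and $K(\sigma)\cap R=\emptyset$;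 (ii) for every $R\subseteq H$, if $D(\sigma)\subseteq R$ for some defining set of $\sigma$ and $K(\sigma)\cap R=\emptyset$, then $\sigma\in\mathcal{CD}(R)$. Local growth function: $u(m)=\max_{I\subseteq H,\,|I|=m}|\mathcal{CD}(I)|$. A $\rho$-sample is the set of elements obtained by $\rho$ independent uniform draws from $H$, with repetition. For a fixed $\rho$, a cell $\sigma$ is $\ell$-heavy if $|K(\sigma)|\ge \ell n/\rho$, where $n=|H|$. *)

(* Defs.v *)
From Stdlib Require Import Reals.
From mathcomp Require Import all_boot.

Set Implicit Arguments.
Unset Strict Implicit.
Unset Printing Implicit Defensive.

Local Open Scope R_scope.

(* H : finite type of objects; C : type of (all possible) cells;
   CD I : the set of cells determined by I ⊆ H. *)

Definition is_defining_set (H C : finType) (CD : {set H} -> {set C})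
    (s : C) (J : {set H}) : Prop :=
  s \in CD J /\ (forall J' : {set H}, s \in CD J' -> (#|J| <= #|J'|)%N).

Definition dim_bound (H C : finType) (CD : {set H} -> {set C}) (b : nat) : Prop :=
  forall (I : {set H}) (s : C), s \in CD I ->
    exists J : {set H}, [/\ J \subset I, (#|J| <= b)%N & s \in CD J].

Definition comb_dim (H C : finType) (CD : {set H} -> {set C}) (b : nat) : Prop :=
  [/\ (0 < b)%N, dim_bound CD b &
      forall b', (0 < b')%N -> dim_bound CD b' -> (b <= b')%N].

Definition conflict_list (H C : finType) (CD : {set H} -> {set C})
    (D : C -> {set H}) (s : C) : {set H} :=
  [set f | s \notin CD (D s :|: [set f])].

Definition complies (H C : finType) (CD : {set H} -> {set C})
    (D : C -> {set H}) : Prop :=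
  (forall (S : {set H}) (s : C), s \in CD S ->
     (exists J, is_defining_set CD s J /\ J \subset S) /\
     [disjoint conflict_list CD D s & S]) /\
  (forall (S : {set H}) (s : C),
     (exists J, is_defining_set CD s J /\ J \subset S) ->
     [disjoint conflict_list CD D s & S] -> s \in CD S).

Definition local_growth (H C : finType) (CD : {set H} -> {set C}) (m : nat) : nat :=
  \max_(I : {set H} | #|I| == m) #|CD I|.

(* x^y for x >= 0 real, with the convention 0^y = 0 (y > 0). *)
Definition rpow0 (x y : R) : R :=
  if Req_EM_T x 0 then 0 else Rpower x y.

Definition heavy_cells (H C : finType) (CD : {set H} -> {set C})
    (D : C -> {set H}) (rho : nat) (l : R) (S : {set H}) : {set C} :=
  [set s in CD S |
     if Rle_dec (l * INR (#|H|) / INR rho) (INR (#|conflict_list CD D s|))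
     then true else false].

(* The set of elements of a rho-sample (rho independent uniform draws). *)
Definition sample_set (H : finType) (rho : nat) (t : {ffun 'I_rho -> H}) : {set H} :=
  [set x | x \in codom t].

Definition expected_heavy (H C : finType) (CD : {set H} -> {set C})
    (D : C -> {set H}) (rho : nat) (l : R) : R :=
  (INR (\sum_(t : {ffun 'I_rho -> H}) #|heavy_cells CD D rho l (sample_set t)|)
   / INR (#|H| ^ rho)%N).

(* Main.v *)
Require Import Defs.
From Stdlib Require Import Reals.
From mathcomp Require Import all_boot.
From Stdlib Require Import Lra.
From mathcomp Require Import zify.

Set Implicit Arguments.
Unset Strict Implicit.
Unset Printing Implicit Defensive.

Lemma card_sum (T : finType) (A : {set T}) : #|A| = \sum_(x : T) (x \in A).
Proof. by rewrite -sum1_card big_mkcond; apply: eq_bigr => x _; case: (x \in A). Qed.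

Lemma card_exchange (I J : finType) (F : I -> J -> bool) :
  \sum_(i : I) #|[set j | F i j]| = \sum_(j : J) #|[set i | F i j]|.
Proof.
under eq_bigr => i _ do rewrite card_sum.
rewrite exchange_big; apply: eq_bigr => j _; rewrite card_sum.
by apply: eq_bigr => i _; rewrite !inE.
Qed.

Section NatPart.
Variables (H C : finType) (CD : {set H} -> {set C}) (D : C -> {set H}) (b : nat).
Hypothesis Hdim : dim_bound CD b.
Hypothesis Hcomp : complies CD D.
Variable s0 : C.
Local Notation K := (conflict_list CD D s0).

Definition ecount m := #|[set x : {ffun 'I_m -> H} | s0 \in CD (sample_set x)]|.
Definition del m (i : 'I_m.+1) (x : {ffun 'I_m.+1 -> H}) : {ffun 'I_m -> H} :=
  [ffun j => x (lift i j)].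
Definition ext m (i : 'I_m.+1) (p : {ffun 'I_m -> H} * H) : {ffun 'I_m.+1 -> H} :=
  [ffun j => if unlift i j is Some j' then p.1 j' else p.2].

Lemma del_ext m (i : 'I_m.+1) p : del i (ext i p) = p.1.
Proof. by apply/ffunP => j; rewrite !ffunE liftK. Qed.
Lemma ext_i m (i : 'I_m.+1) p : ext i p i = p.2.
Proof. by rewrite ffunE unlift_none. Qed.
Lemma ext_del m (i : 'I_m.+1) x : ext i (del i x, x i) = x.
Proof.
apply/ffunP => j; rewrite ffunE /=.
case: (eqVneq i j) => [->|nij]; first by rewrite unlift_none.
by have [j' -> ->] := unlift_some nij; rewrite ffunE.
Qed.
Lemma ext_inj m (i : 'I_m.+1) : injective (ext i).
Proof.
move=> [y h] [y' h'] e.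
have e1 := congr1 (del i) e; have e2 := congr1 (fun x : {ffun 'I_m.+1 -> H} => x i) e.
by rewrite !del_ext /= in e1; rewrite !ext_i /= in e2; rewrite e1 e2.
Qed.

Lemma card_good m (i : 'I_m.+1) :
  #|[set x : {ffun 'I_m.+1 -> H} | (s0 \in CD (sample_set (del i x))) && (x i \notin K)]|
  = ecount m * (#|H| - #|K|).
Proof.
have -> : [set x : {ffun 'I_m.+1 -> H} | (s0 \in CD (sample_set (del i x))) && (x i \notin K)]
   = ext i @: setX [set y : {ffun 'I_m -> H} | s0 \in CD (sample_set y)] (~: K).
  apply/setP => x; rewrite inE; apply/idP/imsetP.
  - move=> /andP[h1 h2]; exists (del i x, x i); last by rewrite ext_del.
    by rewrite in_setX in_setC h2 andbT inE.
  - case=> [[y h]]; rewrite in_setX in_setC /= => /andP[h1 h2] ->; rewrite inE in h1.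
    by rewrite del_ext ext_i h1 h2.
rewrite card_imset; last exact: ext_inj.
rewrite cardsX; congr (_ * _); have := cardsC K; lia.
Qed.

Lemma good_large m (x : {ffun 'I_m.+1 -> H}) : s0 \in CD (sample_set x) ->
  m.+1 - b <= #|[set i | (s0 \in CD (sample_set (del i x))) && (x i \notin K)]|.
Proof.
move=> hx; case: Hcomp => Hc1 Hc2.
have [[J [hJdef hJsub]] hdisj] := Hc1 _ _ hx.
have hJb : #|J| <= b.
  by case: (Hdim hx) => J' [_ hJ'b hJ']; exact: leq_trans (hJdef.2 _ hJ') hJ'b.
set Q := [set i | (x i \in J) && ([pick j | x j == x i] == Some i)].
have hQ : #|Q| <= #|J|.
  rewrite -(@card_in_imset _ _ (fun i => x i) Q).
    apply: subset_leq_card; apply/subsetP => h /imsetP [i]; rewrite inE.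
    by move=> /andP[hi _] ->.
  move=> i1 i2; rewrite !inE => /andP[_ /eqP e1] /andP[_ /eqP e2] exx.
  by rewrite exx e2 in e1; case: e1.
have hsub : ~: Q \subset [set i | (s0 \in CD (sample_set (del i x))) && (x i \notin K)].
  apply/subsetP => i; rewrite in_setC in_set => hiQ; rewrite in_set; apply/andP; split.
  - apply: Hc2.
      exists J; split => //; apply/subsetP => h hh.
      have : h \in sample_set x by apply: (subsetP hJsub).
      rewrite inE => /codomP [j0 ej0].
      have [j1 hj1 Ep] : exists2 j1, x j1 == h & [pick j | x j == h] = Some j1.
        case: pickP => [j1 hj1|hnone]; first by exists j1.
        by have := hnone j0; rewrite -ej0 eqxx.
      have j1Q : j1 \in Q by rewrite inE (eqP hj1) hh Ep eqxx.
      have nij : i != j1.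
        apply/eqP => e; move: hiQ; rewrite e => /negP; exact.
      have [j' ej' _] := unlift_some nij.
      by rewrite inE; apply/codomP; exists j'; rewrite ffunE -ej' (eqP hj1).
    apply: disjointWr hdisj; apply/subsetP => h; rewrite !inE => /codomP [j ->].
    by rewrite ffunE; apply/codomP; exists (lift i j).
  - have hin : x i \in sample_set x by rewrite inE; apply/codomP; exists i.
    by have := disjointFl hdisj hin; rewrite inE => ->.
have := subset_leq_card hsub; have := cardsC Q; rewrite card_ord; lia.
Qed.

Lemma step m : (m.+1 - b) * ecount m.+1 <= m.+1 * (ecount m * (#|H| - #|K|)).
Proof.
rewrite /ecount mulnC -sum_nat_const.
apply: (@leq_trans (\sum_(x in [set x : {ffun 'I_m.+1 -> H} | s0 \in CD (sample_set x)])
   #|[set i | (s0 \in CD (sample_set (del i x))) && (x i \notin K)]|)).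
  by apply: leq_sum => x; rewrite inE => hx; apply: good_large.
apply: (@leq_trans (\sum_(x : {ffun 'I_m.+1 -> H})
   #|[set i | (s0 \in CD (sample_set (del i x))) && (x i \notin K)]|)).
  by rewrite [X in X <= _]big_mkcond; apply: leq_sum => x _; case: ifP.
rewrite (card_exchange (fun x i => (s0 \in CD (sample_set (del i x))) && (x i \notin K))).
under eq_bigr => i _ do rewrite card_good.
by rewrite sum_nat_const card_ord.
Qed.

Lemma iter t : b <= t -> forall s,
  t ^_ b * ecount (t + s) <= (t + s) ^_ b * (#|H| - #|K|) ^ s * ecount t.
Proof.
move=> bt; elim=> [|s IH]; first by rewrite addn0 expn0 muln1 mulnC.
rewrite addnS; set N := t + s in IH *; set nk := #|H| - #|K|.
have pos : 0 < N.+1 - b by rewrite /N; lia.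
rewrite -(leq_pmul2l pos).
apply: (@leq_trans (t ^_ b * (N.+1 * (ecount N * nk)))).
  by rewrite mulnCA leq_mul2l step orbT.
apply: (@leq_trans (N.+1 * nk * (N ^_ b * nk ^ s * ecount t))).
  have -> : t ^_ b * (N.+1 * (ecount N * nk)) = N.+1 * nk * (t ^_ b * ecount N) by lia.
  by rewrite leq_mul2l IH orbT.
have eq : (N.+1 - b) * N.+1 ^_ b = N.+1 * N ^_ b by rewrite mulnC -ffactnSr ffactSS.
rewrite expnS !mulnA eq; apply: eq_leq; lia.
Qed.

End NatPart.

Lemma ffact3 r c : 4 * c <= r -> r ^_ c <= 3 ^ c * (r %/ 2) ^_ c.
Proof.
elim: c => [|c IH] h; first by rewrite !ffactn0.
have IH' := IH ltac:(lia).
rewrite !ffactnSr expnS.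
have h2 : r - c <= 3 * (r %/ 2 - c) by lia.
have := leq_mul IH' h2; lia.
Qed.

Lemma per_cell_nat (H C : finType) (CD : {set H} -> {set C}) (D : C -> {set H}) b rho s0 :
  dim_bound CD b -> complies CD D -> 4 * b <= rho ->
  ecount CD s0 rho <= 3 ^ b * (#|H| - #|conflict_list CD D s0|) ^ (rho - rho %/ 2)
                       * ecount CD s0 (rho %/ 2).
Proof.
move=> hd hc hr.
have bt : b <= rho %/ 2 by lia.
have tr : rho %/ 2 <= rho by lia.
have := iter hd hc s0 bt (rho - rho %/ 2); rewrite subnKC // => h.
have pos : 0 < (rho %/ 2) ^_ b by rewrite ffact_gt0.
rewrite -(leq_pmul2l pos); apply: leq_trans h _.
have h3 := ffact3 hr.
apply: leq_trans (leq_mul (leq_mul h3 (leqnn _)) (leqnn _)) _.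
apply: eq_leq; lia.
Qed.

Local Open Scope R_scope.

Lemma INR_addn m n : INR (m + n)%N = INR m + INR n.
Proof. exact: plus_INR. Qed.
Lemma INR_muln m n : INR (m * n)%N = INR m * INR n.
Proof. exact: mult_INR. Qed.
Lemma INR_expn m n : INR (m ^ n)%N = INR m ^ n.
Proof. elim: n => [|n IH]; first by rewrite expn0. by rewrite expnS INR_muln IH. Qed.
Lemma INR_subn m n : (n <= m)%N -> INR (m - n)%N = INR m - INR n.
Proof. move=> h; have := INR_addn (m - n) n; rewrite subnK //; lra. Qed.
Lemma INR_le m n : (m <= n)%N -> INR m <= INR n.
Proof. by move/leP; apply: le_INR. Qed.

Lemma INR_sum_le (I : finType) (P : pred I) (F G : I -> nat) (c : R) :
  0 <= c -> (forall i, P i -> INR (F i) <= c * INR (G i)) ->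
  INR (\sum_(i | P i) F i) <= c * INR (\sum_(i | P i) G i).
Proof.
move=> c0 h.
apply: (big_ind2 (fun a b => INR a <= c * INR b)) => //.
- by rewrite /=; lra.
- move=> a1 b1 a2 b2 h1 h2; rewrite !INR_addn; lra.
Qed.

Lemma exp_le x y : x <= y -> exp x <= exp y.
Proof. case=> [h|->]; [left; exact: exp_increasing | right; reflexivity]. Qed.

Lemma exp_pow_INR z s : exp z ^ s = exp (INR s * z).
Proof.
elim: s => [|s IH]; first by rewrite /= Rmult_0_l exp_0.
change (exp z ^ s.+1) with (exp z * exp z ^ s).
by rewrite IH S_INR -exp_plus; congr exp; ring.
Qed.

Lemma decay (x y l r : R) (s : nat) : 0 < x -> 0 <= y <= x -> 0 < r -> 0 < l ->
  l * x / r <= y -> r <= 2 * INR s -> (x - y) ^ s <= x ^ s * exp (- l / 2).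
Proof.
move=> x0 [y0 yx] r0 l0 hy hs.
have h1 : x - y <= x * exp (- (y / x)).
  have := exp_ineq1_le (- (y / x)) => e.
  have -> : x - y = x * (1 + - (y / x)) by field; lra.
  apply: Rmult_le_compat_l; lra.
apply: Rle_trans (_ : (x * exp (- (y / x))) ^ s <= _).
  apply: pow_incr; lra.
rewrite Rpow_mult_distr exp_pow_INR.
apply: Rmult_le_compat_l; first by apply: pow_le; lra.
apply: exp_le.
have q : l / r <= y / x.
  apply: (Rmult_le_reg_r x) => //.
  have -> : l / r * x = l * x / r by field; lra.
  have -> : y / x * x = y by field; lra.
  done.
have : r / 2 * (l / r) <= INR s * (y / x).
  apply: Rmult_le_compat; try lra.
  apply: Rlt_le; apply: Rdiv_lt_0_compat; lra.
have -> : r / 2 * (l / r) = l / 2 by field; lra.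
lra.
Qed.

Lemma Rpower_pos x y : 0 < Rpower x y.
Proof. rewrite /Rpower; exact: exp_pos. Qed.

Lemma rpow_bound alpha beta m rho : 1 <= beta -> (0 < rho)%N -> (2 * m <= rho)%N ->
  Rpower 2 alpha * rpow0 (INR m) beta <= Rpower 2 (alpha - beta) * Rpower (INR rho) beta.
Proof.
move=> hb hr hm.
have := Rpower_pos 2 (alpha - beta); have := Rpower_pos (INR rho) beta => p1 p2.
rewrite /rpow0; destruct (Req_EM_T (INR m) 0) as [e0|m0].
  rewrite Rmult_0_r; apply: Rlt_le; exact: Rmult_lt_0_compat.
have mpos : 0 < INR m by have := pos_INR m; lra.
have hm' : INR m <= INR rho / 2.
  have := INR_le hm; rewrite INR_muln /=; lra.
apply: Rle_trans (_ : Rpower 2 alpha * Rpower (INR rho / 2) beta <= _).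
  apply: Rmult_le_compat_l; first exact: Rlt_le (Rpower_pos _ _).
  apply: Rle_Rpower_l; lra.
rewrite /Rpower /Rdiv ln_mult; last (by apply: Rinv_0_lt_compat; lra); last first.
  by apply: lt_0_INR; apply/leP.
rewrite ln_Rinv; last lra.
rewrite -!exp_plus; apply: exp_le; right; ring.
Qed.

Lemma card_sample (H : finType) t (y : {ffun 'I_t -> H}) : (#|sample_set y| <= t)%N.
Proof.
have sub : sample_set y \subset [set y i | i in [set: 'I_t]].
  apply/subsetP => h; rewrite /sample_set inE => /codomP [i ->]; by apply/imsetP; exists i; rewrite ?in_setT.
apply: leq_trans (subset_leq_card sub) _.
by apply: leq_trans (leq_imset_card _ _) _; rewrite cardsT card_ord.
Qed.

Lemma simp_eq (a e w1 w2 A B : R) : A <> 0 -> B <> 0 ->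
  a * B * e * (w1 * w2 * A) / (A * B) = a * w1 * w2 * e.
Proof. by move=> hA hB; field; split. Qed.

Theorem mainTheorem2 (H C : finType) (CD : {set H} -> {set C})
    (D : C -> {set H}) (b rho : nat) (alpha beta l : R)
    (Hn : (0 < #|H|)%N)
    (Hb : comb_dim CD b)
    (HD : forall (I : {set H}) (s : C), s \in CD I -> is_defining_set CD s (D s))
    (Hcomp : complies CD D)
    (Hbeta : 1 <= beta)
    (Hu : forall m : nat,
        INR (local_growth CD m) <= Rpower 2 alpha * rpow0 (INR m) beta)
    (Hrho : (4 * b <= rho)%N)
    (Hl : 1 < l) :
  expected_heavy CD D rho l
     <= 3 ^ b * Rpower 2 (alpha - beta) * Rpower (INR rho) beta * exp (- l / 2).
Proof.
have hb0 : (0 < b)%N by case: Hb.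
have hdim : dim_bound CD b by case: Hb.
have rho0 : (0 < rho)%N by lia.
have tr : (rho %/ 2 <= rho)%N by lia.
have t2 : (2 * (rho %/ 2) <= rho)%N by lia.
have s2 : INR rho <= 2 * INR (rho - rho %/ 2).
  have : (rho <= 2 * (rho - rho %/ 2))%N by lia.
  by move/INR_le; rewrite INR_muln.
have hnpos : 0 < INR #|H| by apply: lt_0_INR; apply/leP.
have hrpos : 0 < INR rho by apply: lt_0_INR; apply/leP.
set n := #|H| in hnpos Hn *.
set t := (rho %/ 2)%N in tr t2 s2 *.
set s := (rho - t)%N in s2 *.
pose hv := fun sg : C =>
  if Rle_dec (l * INR n / INR rho) (INR #|conflict_list CD D sg|) then true else false.
pose c := 3 ^ b * INR n ^ s * exp (- l / 2).
pose W := Rpower 2 (alpha - beta) * Rpower (INR rho) beta.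
have c0 : 0 <= c.
  apply: Rmult_le_pos; last exact: Rlt_le (exp_pos _).
  apply: Rmult_le_pos; apply: pow_le; lra.
have W0 : 0 <= W by apply: Rlt_le; apply: Rmult_lt_0_compat; apply: Rpower_pos.
have E1 : (\sum_(x : {ffun 'I_rho -> H}) #|heavy_cells CD D rho l (sample_set x)|)%N
   = (\sum_(sg : C) #|[set x : {ffun 'I_rho -> H} | (sg \in CD (sample_set x)) && hv sg]|)%N.
  rewrite -(card_exchange (fun x sg => (sg \in CD (sample_set x)) && hv sg)).
  by apply: eq_bigr => x _; apply: eq_card => sg; rewrite /heavy_cells !in_set.
have E2 : INR (\sum_(sg : C) #|[set x : {ffun 'I_rho -> H} | (sg \in CD (sample_set x)) && hv sg]|)
   <= c * INR (\sum_(sg : C) ecount CD sg t).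
  apply: INR_sum_le => // sg _.
  case hvs: (hv sg).
  - have -> : #|[set x : {ffun 'I_rho -> H} | (sg \in CD (sample_set x)) && true]| = ecount CD sg rho.
      by apply: eq_card => x; rewrite !in_set andbT.
    have hk : (#|conflict_list CD D sg| <= n)%N by apply: max_card.
    have hl : l * INR n / INR rho <= INR #|conflict_list CD D sg|.
      by move: hvs; rewrite /hv; case: Rle_dec.
    apply: Rle_trans (INR_le (per_cell_nat sg hdim Hcomp Hrho)) _.
    rewrite -/t -/s !INR_muln !INR_expn INR_subn //= /c.
    have hpow : (INR n - INR #|conflict_list CD D sg|) ^ s <= INR n ^ s * exp (- l / 2).
      apply: (decay (r := INR rho)) => //; try lra.
      split; [exact: pos_INR | exact: INR_le].
    have h3 : 0 <= 3 ^ b by apply: pow_le; lra.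
    have he : 0 <= INR (ecount CD sg t) by apply: pos_INR.
    have hp : 0 <= (INR n - INR #|conflict_list CD D sg|) ^ s.
      by apply: pow_le; have := INR_le hk; lra.
    replace (1 + 1 + 1) with 3 by ring; rewrite -/n.
    apply: Rmult_le_compat_r => //.
    rewrite Rmult_assoc; apply: Rmult_le_compat_l => //.
  - have -> : #|[set x : {ffun 'I_rho -> H} | (sg \in CD (sample_set x)) && false]| = 0%N.
      by apply/eqP; rewrite cards_eq0; apply/eqP/setP => x; rewrite !in_set andbF.
    by rewrite /=; apply: Rmult_le_pos => //; apply: pos_INR.
have E3 : (\sum_(sg : C) ecount CD sg t = \sum_(y : {ffun 'I_t -> H}) #|CD (sample_set y)|)%N.
  have -> : (\sum_(y : {ffun 'I_t -> H}) #|CD (sample_set y)|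
     = \sum_(y : {ffun 'I_t -> H}) #|[set sg | sg \in CD (sample_set y)]|)%N.
    by apply: eq_bigr => y _; apply: eq_card => sg; rewrite in_set.
  rewrite (card_exchange (fun y sg => sg \in CD (sample_set y))).
  by apply: eq_bigr => sg _; rewrite /ecount; apply: eq_card => y; rewrite !in_set.
have E4 : INR (\sum_(y : {ffun 'I_t -> H}) #|CD (sample_set y)|)
   <= W * INR (\sum_(y : {ffun 'I_t -> H}) 1%N).
  apply: INR_sum_le => // y _; rewrite /= Rmult_1_r.
  apply: Rle_trans (_ : INR (local_growth CD #|sample_set y|) <= _).
    apply: INR_le; rewrite /local_growth.
    exact: (@leq_bigmax_cond _ (fun I : {set H} => #|I| == #|sample_set y|) (fun I => #|CD I|)).
  apply: Rle_trans (Hu _) _; apply: rpow_bound => //.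
  by apply: leq_trans t2; rewrite leq_mul2l card_sample orbT.
have E5 : (\sum_(y : {ffun 'I_t -> H}) 1 = n ^ t)%N.
  by rewrite sum1_card card_ffun card_ord.
have En : (n ^ rho = n ^ t * n ^ s)%N by rewrite -expnD subnKC.
rewrite /expected_heavy E1 En INR_muln !INR_expn.
rewrite E3 in E2; rewrite E5 INR_expn in E4.
apply: Rle_trans (_ : c * (W * INR n ^ t) / (INR n ^ t * INR n ^ s) <= _).
  rewrite /Rdiv; apply: Rmult_le_compat_r.
    by apply: Rlt_le; apply: Rinv_0_lt_compat; apply: Rmult_lt_0_compat; apply: pow_lt.
  apply: Rle_trans E2 _; apply: Rmult_le_compat_l => //.
right; rewrite /c /W; apply: simp_eq; apply: pow_nonzero; lra.
Qed.
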